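(* Let $\Sigma$ be a simply connected minimal surface in $\mathbb{R}^3$, parametrized (up to translations) by the conformal harmonic immersion \[ \mathbf{X}(\zeta)=\Big(\mathrm{Re}\int\phi_1(\zeta)\,d\zeta,\ \mathrm{Re}\int\phi_2(\zeta)\,d\zeta,\ \mathrm{Re}\int\phi_3(\zeta)\,d\zeta\Big), \] where $\zeta$ is a conformal coordinate and the holomorphic null curve $\phi=(\phi_1,\phi_2,\phi_3)$ is given in terms of Weierstrass data $(G(\zeta),\Psi(\zeta)\,d\zeta)$ by \[ \phi=\Big(\tfrac12(1-G^2)\Psi,\ \tfrac{i}{2}(1+G^2)\Psi,\ G\Psi\Big). \] For each $\theta\in(-\frac{\pi}{2},\frac{\pi}{2})$ define the holomorphic curve \[ \widetilde{\phi}=(\widetilde{\phi}_0,\widetilde{\phi}_1,\widetilde{\phi}_2,\widetilde{\phi}_3)=\Big(\frac{\sin\theta}{2}\Big(1+\frac{G^2}{\cos^2\theta}\Big)\Psi,\ \frac{\cos\theta}{2}\Big(1-\frac{G^2}{\cos^2\theta}\Big)\Psi,\ \frac{i}{2}\Big(1+\frac{G^2}{\cos^2\theta}\Big)\Psi,\ G\Psi\Big) \] (so that $\widetilde{\phi}_0=-i(\sin\theta)\,\widetilde{\phi}_2$). Then there exists a degenerate minimal surface $\Sigma^{\tan\theta}$ in $\mathbb{R}^4$, parametrized (up to translations) by the conformal harmonic immersion \[ \mathbf{X}^{\tan\theta}(\zeta)=\Big(\mathrm{Re}\int\widetilde{\phi}_0\,d\zeta,\ \mathrm{Re}\int\widetilde{\phi}_1\,d\zeta,\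 \mathrm{Re}\int\widetilde{\phi}_2\,d\zeta,\ \mathrm{Re}\int\widetilde{\phi}_3\,d\zeta\Big). \]
   Context: For a conformal harmonic immersion $\mathbf{X}:\Sigma\to\mathbb{R}^4$ with local conformal coordinate $\zeta$, its Gauss map is $\mathcal{G}(\zeta)=[\partial\mathbf{X}/\partial\zeta]\in\mathbb{CP}^3$, taking values in the quadric $\{z_0^2+z_1^2+z_2^2+z_3^2=0\}$. The minimal surface is called degenerate if the image of its Gauss map lies in a hyperplane of $\mathbb{CP}^3$. *)

(* Defs.v *)
From Stdlib Require Import Reals.
From Coquelicot Require Import Coquelicot.

Open Scope R_scope.

Fixpoint rsum (n : nat) (f : nat -> R) : R :=
  match n with O => 0 | S m => rsum m f + f m end.
Fixpoint csum (n : nat) (f : nat -> C) : C :=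
  match n with O => RtoC 0 | S m => Cplus (csum m f) (f m) end.

(** [gamma] is a continuous path, lying in [U] on [0,1]
    (defined on all of R, only its restriction to [0,1] matters). *)
Definition path_in (U : C -> Prop) (gamma : R -> C) : Prop :=
  (forall t, continuous gamma t) /\ (forall t, 0 <= t <= 1 -> U (gamma t)).

Definition path_connected (U : C -> Prop) : Prop :=
  forall z w, U z -> U w ->
    exists gamma, path_in U gamma /\ gamma 0 = z /\ gamma 1 = w.

Definition loops_contractible (U : C -> Prop) : Prop :=
  forall gamma : R -> C, path_in U gamma -> gamma 0 = gamma 1 ->
    exists H : R * R -> C,
      (forall p, continuous H p) /\
      (forall s t, 0 <= s <= 1 -> 0 <= t <= 1 -> U (H (s, t))) /\
      (forall s, 0 <= s <= 1 -> H (s, 0) = gamma s) /\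
      (forall s, 0 <= s <= 1 -> H (s, 1) = H (0, 1)) /\
      (forall t, 0 <= t <= 1 -> H (0, t) = H (1, t)).

Definition simply_connected_domain (U : C -> Prop) : Prop :=
  (exists z, U z) /\ open U /\ path_connected U /\ loops_contractible U.

Definition discrete_in (U P : C -> Prop) : Prop :=
  forall z, U z -> exists eps : posreal,
    forall w, w <> z -> Cmod (Cminus w z) < eps -> ~ P w.

Definition holomorphic_on (U : C -> Prop) (f : C -> C) : Prop :=
  forall z, U z -> @ex_derive C_AbsRing C_NormedModule f z.

Definition primitive_on (U : C -> Prop) (phi F : C -> C) : Prop :=
  forall z, U z -> @is_derive C_AbsRing C_NormedModule F z (phi z).

Definition px (f : C -> R) (z : C) : R :=
  Derive (fun t => f (t, snd z)) (fst z).
Definition py (f : C -> R) (z : C) : R :=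
  Derive (fun t => f (fst z, t)) (snd z).

Definition rdiff_at (f : C -> R) (z : C) : Prop :=
  differentiable_pt (fun x y => f (x, y)) (fst z) (snd z).

Definition C2_on (U : C -> Prop) (f : C -> R) : Prop :=
  forall z, U z ->
    rdiff_at f z /\ rdiff_at (px f) z /\ rdiff_at (py f) z /\
    continuous (px (px f)) z /\ continuous (py (px f)) z /\
    continuous (px (py f)) z /\ continuous (py (py f)) z.

(** A map [X : U -> R^n], [X z = (X 0 z, ..., X (n-1) z)]. *)
Definition harmonic_on (U : C -> Prop) (n : nat) (X : nat -> C -> R) : Prop :=
  forall k, (k < n)%nat -> C2_on U (X k) /\
    forall z, U z -> px (px (X k)) z + py (py (X k)) z = 0.

Definition conformal_on (U : C -> Prop) (n : nat) (X : nat -> C -> R) : Prop :=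
  forall z, U z ->
    rsum n (fun k => px (X k) z ^ 2) = rsum n (fun k => py (X k) z ^ 2) /\
    rsum n (fun k => px (X k) z * py (X k) z) = 0.

Definition immersion_on (U : C -> Prop) (n : nat) (X : nat -> C -> R) : Prop :=
  forall z, U z -> forall a b : R,
    (forall k, (k < n)%nat -> a * px (X k) z + b * py (X k) z = 0) ->
    a = 0 /\ b = 0.

Definition conformal_harmonic_immersion (U : C -> Prop) (n : nat)
    (X : nat -> C -> R) : Prop :=
  harmonic_on U n X /\ conformal_on U n X /\ immersion_on U n X.

(** dX_k/dzeta = (X_x - i X_y)/2 ; the Gauss map is [dX/dzeta] in CP^(n-1). *)
Definition dzeta (f : C -> R) (z : C) : C :=
  Cmult (RtoC (/ 2)) (Cminus (RtoC (px f z)) (Cmult Ci (RtoC (py f z)))).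

(** Degenerate: the image of the Gauss map lies in a hyperplane of CP^(n-1):
    some nonzero linear form vanishes on dX/dzeta everywhere on U. *)
Definition degenerate_on (U : C -> Prop) (n : nat) (X : nat -> C -> R) : Prop :=
  exists a : nat -> C,
    (exists k, (k < n)%nat /\ a k <> RtoC 0) /\
    forall z, U z -> csum n (fun k => Cmult (a k) (dzeta (X k) z)) = RtoC 0.

(** [X] is, up to translations, Re \int phi : X_k = Re F_k with F_k' = phi_k. *)
Definition Re_integral_param (U : C -> Prop) (n : nat) (phi : nat -> C -> C)
    (X : nat -> C -> R) : Prop :=
  exists F : nat -> C -> C,
    forall k, (k < n)%nat ->
      primitive_on U (phi k) (F k) /\ forall z, U z -> X k z = Re (F k z).

(** phi = (phi_1, phi_2, phi_3) stored at indices 0, 1, 2. *)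
Definition weierstrass_phi (G Psi : C -> C) (k : nat) (z : C) : C :=
  match k with
  | O => Cmult (Cmult (RtoC (/ 2)) (Cminus (RtoC 1) (Cmult (G z) (G z)))) (Psi z)
  | 1%nat => Cmult (Cmult (Cmult (RtoC (/ 2)) Ci) (Cplus (RtoC 1) (Cmult (G z) (G z)))) (Psi z)
  | _ => Cmult (G z) (Psi z)
  end.

Definition tilde_phi (theta : R) (G Psi : C -> C) (k : nat) (z : C) : C :=
  let q := Cdiv (Cmult (G z) (G z)) (RtoC (cos theta ^ 2)) in
  match k with
  | O => Cmult (Cmult (RtoC (sin theta / 2)) (Cplus (RtoC 1) q)) (Psi z)
  | 1%nat => Cmult (Cmult (RtoC (cos theta / 2)) (Cminus (RtoC 1) q)) (Psi z)
  | 2%nat => Cmult (Cmult (Cmult (RtoC (/ 2)) Ci) (Cplus (RtoC 1) q)) (Psi z)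
  | _ => Cmult (G z) (Psi z)
  end.

(* Main.v *)
Require Import Defs.
From Stdlib Require Import Reals Lra Lia.
From Coquelicot Require Import Coquelicot.
Open Scope R_scope.


Lemma ball_lem x y u v (d:posreal) : Rabs (u - x) < d/2 -> Rabs (v-y) < d/2 ->
  @ball (AbsRing_UniformSpace C_AbsRing) (x,y) d (u,v).
Proof.
  intros H0 H1.
  assert (H: Cmod (u + - x, v + - y) <= 2 * Rmax (Rabs (u + - x)) (Rabs (v + - y))).
  { assert (Hs : sqrt 2 < 2).
    { pose proof (sqrt_sqrt 2 ltac:(lra)). pose proof (sqrt_pos 2). nra. }
    pose proof (sqrt_pos 2).
    pose proof (Cmod_2Rmax (u + - x, v + - y)) as Hm; simpl in Hm;
    pose proof (Rmax_l (Rabs (u + - x)) (Rabs (v + - y))) as Hm1;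
    pose proof (Rabs_pos (u + - x)); nra. }
  unfold ball; simpl; unfold AbsRing_ball, abs, minus, plus, opp; simpl.
  change ((u, v) + - (x, y))%C with (u + -x, v + -y).
  pose proof (Rmax_lub_lt (Rabs (u + - x)) (Rabs (v + - y)) (d/2) H0 H1). lra.
Qed.

Lemma cm2 x y : Cmod (x, y) <= 2 * Rmax (Rabs x) (Rabs y).
Proof.
  assert (Hs : sqrt 2 < 2).
  { pose proof (sqrt_sqrt 2 ltac:(lra)). pose proof (sqrt_pos 2). nra. }
  pose proof (sqrt_pos 2).
  pose proof (Cmod_2Rmax (x, y)) as Hm; simpl in Hm;
  pose proof (Rmax_l (Rabs x) (Rabs y)) as Hm1;
  pose proof (Rabs_pos x); nra.
Qed.

Lemma im_le_Cmod c : Rabs (Im c) <= Cmod c.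
Proof.
  pose proof (Cmod2_alt c). pose proof (Cmod_ge_0 c). pose proof (Rabs_pos (Im c)).
  pose proof (pow2_abs (Im c)). nra.
Qed.

Lemma key (F : C -> C) (z l : C) : @is_derive C_AbsRing C_NormedModule F z l ->
  differentiable_pt_lim (fun x y => Re (F (x,y))) (fst z) (snd z) (Re l) (- Im l) /\
  differentiable_pt_lim (fun x y => Im (F (x,y))) (fst z) (snd z) (Im l) (Re l).
Proof.
  intros [_ Hd].
  assert (Hl : @is_filter_lim (AbsRing_NormedModule C_AbsRing) (@locally (AbsRing_UniformSpace C_AbsRing) z) z) by (intros P HP; exact HP).
  specialize (Hd z Hl).
  split; intros eps; destruct (Hd (pos_div_2 eps)) as [d Hdd];
  exists (pos_div_2 d); intros u v Hu Hv;
  destruct z as [x y]; destruct l as [a b]; simpl in *;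
  specialize (Hdd _ (ball_lem x y u v d Hu Hv)); simpl in *;
  set (w := F (u,v)) in *; set (w0 := F (x,y)) in *; destruct w as [w1 w2]; destruct w0 as [w01 w02];
  unfold norm, minus, plus, opp, scal in Hdd; simpl in Hdd; unfold mult in Hdd; simpl in Hdd;
  change ((u, v) + - (x, y))%C with (u + -x, v + -y) in Hdd;
  pose proof (cm2 (u + - x) (v + - y)); simpl in Hdd;
  destruct eps as [e He]; simpl in *; unfold Rminus in *;
  match type of Hdd with Cmod ?W <= _ => pose proof (re_le_Cmod W); pose proof (im_le_Cmod W) end;
  unfold abs in Hdd; simpl in *.
  - replace (w1 + - w01 + - (a * (u + - x) + - b * (v + - y))) with (w1 + - w01 + - ((u + - x) * a - (v + - y) * b)) by ring.
    nra.
  - replace (w2 + - w02 + - (b * (u + - x) + a * (v + - y))) with (w2 + - w02 + - ((u + - x) * b + (v + - y) * a)) by ring.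
    nra.
Qed.

Lemma cont_add (f g : C -> R) z : continuous f z -> continuous g z ->
  continuous (fun w => f w + g w) z.
Proof. intros Hf Hg. exact (continuous_plus (V:=R_NormedModule) f g z Hf Hg). Qed.

Lemma cont_mulc (f : C -> R) (a : R) z : continuous f z ->
  continuous (fun w => f w * a) z.
Proof. intros Hf. exact (continuous_mult (K:=R_AbsRing) f (fun _ => a) z Hf (continuous_const _ _)). Qed.

Lemma cont_opp (f : C -> R) z : continuous f z -> continuous (fun w => - f w) z.
Proof. intros Hf. apply (continuous_ext (fun w => f w * (-1))); [intros w; change (f w * -1 = - f w); ring | now apply cont_mulc]. Qed.

Definition lin (cf : nat -> nat -> C) (k : nat) (f0 f1 f2 : C) : C :=
  Cplus (Cplus (Cmult f0 (cf k 0%nat)) (Cmult f1 (cf k 1%nat))) (Cmult f2 (cf k 2%nat)).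

Lemma Cmul_ext (a b : C) : Cmult a b = (fst a * fst b - snd a * snd b, fst a * snd b + snd a * fst b)%R.
Proof. reflexivity. Qed.

Lemma deriv_cmul (F : C -> C) z d k :
  @is_derive C_AbsRing C_NormedModule F z d ->
  @is_derive C_AbsRing C_NormedModule (fun w => Cmult (F w) k) z (Cmult d k).
Proof.
  intros H. unfold is_derive in *.
  apply (filterdiff_ext_lin (K:=C_AbsRing) (U:=AbsRing_NormedModule C_AbsRing) (V:=C_NormedModule)
     (fun w => Cmult (F w) k) (fun y => scal k (scal y d))).
  - apply (filterdiff_ext (K:=C_AbsRing) (U:=AbsRing_NormedModule C_AbsRing) (V:=C_NormedModule)
      (fun x => scal k (F x))).
    + intros y. change (Cmult k (F y) = Cmult (F y) k). apply Cmult_comm.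
    + apply (filterdiff_scal_r_fct (K:=C_AbsRing) (U:=AbsRing_NormedModule C_AbsRing) (V:=C_NormedModule) k F (fun y => scal y d)).
      * intros; apply Cmult_comm.
      * exact H.
  - intros y. change (Cmult k (Cmult y d) = Cmult y (Cmult d k)).
    rewrite (Cmult_comm d k), !Cmult_assoc, (Cmult_comm k y). reflexivity.
Qed.

Lemma deriv_add (F G : C -> C) z d e :
  @is_derive C_AbsRing C_NormedModule F z d ->
  @is_derive C_AbsRing C_NormedModule G z e ->
  @is_derive C_AbsRing C_NormedModule (fun w => Cplus (F w) (G w)) z (Cplus d e).
Proof. intros. apply (is_derive_plus (K:=C_AbsRing) (V:=C_NormedModule)); assumption. Qed.

Lemma lin_derive cf k (F0 F1 F2 : C -> C) z d0 d1 d2 :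
  @is_derive C_AbsRing C_NormedModule F0 z d0 ->
  @is_derive C_AbsRing C_NormedModule F1 z d1 ->
  @is_derive C_AbsRing C_NormedModule F2 z d2 ->
  @is_derive C_AbsRing C_NormedModule (fun w => lin cf k (F0 w) (F1 w) (F2 w)) z (lin cf k d0 d1 d2).
Proof.
  intros H0 H1 H2. unfold lin.
  repeat apply deriv_add; apply deriv_cmul; assumption.
Qed.

Lemma open_loc2d (U : C -> Prop) (Q : R -> R -> Prop) z : open U -> U z ->
  (forall u v, U (u,v) -> Q u v) -> locally_2d Q (fst z) (snd z).
Proof.
  intros HU Hz HQ. apply locally_2d_locally. destruct z as [x y].
  specialize (HU _ Hz). simpl.
  apply (filter_imp (fun w : C => U w)). { intros [u v] Hw. now apply HQ. }
  exact HU.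
Qed.

Lemma dpl_opp f x y lx ly : differentiable_pt_lim f x y lx ly ->
  differentiable_pt_lim (fun u v => - f u v) x y (-lx) (-ly).
Proof.
  intros H eps. destruct (H eps) as [d Hd]. exists d. intros u v Hu Hv.
  specialize (Hd u v Hu Hv).
  replace (- f u v - - f x y - (- lx * (u - x) + - ly * (v - y)))
    with (- (f u v - f x y - (lx * (u - x) + ly * (v - y)))) by ring.
  now rewrite Rabs_Ropp.
Qed.

Lemma dpl_facts (f : C -> R) w lx ly :
  differentiable_pt_lim (fun x y => f (x,y)) (fst w) (snd w) lx ly ->
  rdiff_at f w /\ px f w = lx /\ py f w = ly.
Proof.
  intros H. split. { exists lx, ly. exact H. }
  destruct (differentiable_pt_lim_unique _ _ _ _ _ H) as [H1 H2].
  split; [exact H1 | exact H2].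
Qed.

Definition Cder := @is_derive C_AbsRing C_NormedModule.

Lemma first_re (U : C -> Prop) (H h : C -> C) (f : C -> R) : open U ->
  (forall w, U w -> Cder H w (h w)) -> (forall w, U w -> f w = Re (H w)) ->
  forall w, U w -> differentiable_pt_lim (fun x y => f (x,y)) (fst w) (snd w) (Re (h w)) (- Im (h w)).
Proof.
  intros HU HH Hf w Hw.
  apply differentiable_pt_lim_ext with (fun x y => Re (H (x,y))).
  - apply open_loc2d with U; auto. intros u v Huv. symmetry. now apply Hf.
  - exact (proj1 (key H w (h w) (HH w Hw))).
Qed.

Lemma first_im (U : C -> Prop) (H h : C -> C) (f : C -> R) : open U ->
  (forall w, U w -> Cder H w (h w)) -> (forall w, U w -> f w = - Im (H w)) ->
  forall w, U w -> differentiable_pt_lim (fun x y => f (x,y)) (fst w) (snd w) (- Im (h w)) (- Re (h w)).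
Proof.
  intros HU HH Hf w Hw.
  apply differentiable_pt_lim_ext with (fun x y => - Im (H (x,y))).
  - apply open_loc2d with U; auto. intros u v Huv. symmetry. now apply Hf.
  - apply (dpl_opp (fun x y => Im (H (x,y)))).
    exact (proj2 (key H w (h w) (HH w Hw))).
Qed.

Lemma second (U : C -> Prop) (H h d : C -> C) (f : C -> R) : open U ->
  (forall w, U w -> Cder H w (h w)) -> (forall w, U w -> Cder h w (d w)) ->
  (forall w, U w -> f w = Re (H w)) ->
  forall w, U w ->
    (rdiff_at f w /\ px f w = Re (h w) /\ py f w = - Im (h w)) /\
    (rdiff_at (px f) w /\ px (px f) w = Re (d w) /\ py (px f) w = - Im (d w)) /\
    (rdiff_at (py f) w /\ px (py f) w = - Im (d w) /\ py (py f) w = - Re (d w)).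
Proof.
  intros HU HH Hh Hf.
  assert (F1 : forall w, U w -> rdiff_at f w /\ px f w = Re (h w) /\ py f w = - Im (h w)).
  { intros w Hw. apply dpl_facts. now apply (first_re U H h f). }
  intros w Hw. split; [now apply F1|]. split.
  - apply dpl_facts. apply (first_re U h d (px f)); auto.
    intros w' Hw'. now apply F1.
  - apply dpl_facts. apply (first_im U h d (py f)); auto.
    intros w' Hw'. now apply F1.
Qed.

Definition cfs (s c e : R) (k j : nat) : C :=
  match k, j with
  | 0%nat, 0%nat => (s/2*(1-e), 0)
  | 0%nat, 1%nat => (0, -(s/2*(1+e)))
  | 1%nat, 0%nat => (c/2*(1+e), 0)
  | 1%nat, 1%nat => (0, -(c/2*(1-e)))
  | 2%nat, 0%nat => (0, (1-e)/2)
  | 2%nat, 1%nat => ((1+e)/2, 0)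
  | 3%nat, 2%nat => (1, 0)
  | _, _ => (0, 0)
  end.

Lemma cont_comb (f g : nat -> C -> R) (al be : nat -> R) z :
  (forall j, (j < 3)%nat -> continuous (f j) z /\ continuous (g j) z) ->
  continuous (fun w => f 0%nat w * al 0%nat + g 0%nat w * be 0%nat + (f 1%nat w * al 1%nat + g 1%nat w * be 1%nat)
     + (f 2%nat w * al 2%nat + g 2%nat w * be 2%nat)) z.
Proof.
  intros H.
  destruct (H 0%nat ltac:(lia)), (H 1%nat ltac:(lia)), (H 2%nat ltac:(lia)).
  repeat apply cont_add; apply cont_mulc; assumption.
Qed.

Lemma dt_cont (U : C -> Prop) z (phid : nat -> C -> C) (X : nat -> C -> R) cf k : open U -> U z ->
  (forall j w, (j < 3)%nat -> U w -> Re (phid j w) = px (px (X j)) w /\ Im (phid j w) = - py (px (X j)) w) ->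
  (forall j, (j < 3)%nat -> continuous (px (px (X j))) z /\ continuous (py (px (X j))) z) ->
  continuous (fun w => Re (lin cf k (phid 0%nat w) (phid 1%nat w) (phid 2%nat w))) z /\
  continuous (fun w => Im (lin cf k (phid 0%nat w) (phid 1%nat w) (phid 2%nat w))) z.
Proof.
  intros HU Hz Hf Hc. split.
  - apply continuous_ext_loc with (g := fun w =>
      px (px (X 0%nat)) w * Re (cf k 0%nat) + py (px (X 0%nat)) w * Im (cf k 0%nat)
      + (px (px (X 1%nat)) w * Re (cf k 1%nat) + py (px (X 1%nat)) w * Im (cf k 1%nat))
      + (px (px (X 2%nat)) w * Re (cf k 2%nat) + py (px (X 2%nat)) w * Im (cf k 2%nat))).
    + apply (filter_imp U); [| exact (HU z Hz)].
      intros w Hw.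
      destruct (Hf 0%nat w ltac:(lia) Hw) as [A0 B0].
      destruct (Hf 1%nat w ltac:(lia) Hw) as [A1 B1].
      destruct (Hf 2%nat w ltac:(lia) Hw) as [A2 B2].
      unfold lin, Re, Im in *. simpl. rewrite <- A0, <- A1, <- A2.
      replace (py (px (X 0%nat)) w) with (- snd (phid 0%nat w)) by lra.
      replace (py (px (X 1%nat)) w) with (- snd (phid 1%nat w)) by lra.
      replace (py (px (X 2%nat)) w) with (- snd (phid 2%nat w)) by lra.
      ring.
    + apply (cont_comb (fun j => px (px (X j))) (fun j => py (px (X j)))
        (fun j => Re (cf k j)) (fun j => Im (cf k j))). exact Hc.
  - apply continuous_ext_loc with (g := fun w =>
      px (px (X 0%nat)) w * Im (cf k 0%nat) + py (px (X 0%nat)) w * (- Re (cf k 0%nat))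
      + (px (px (X 1%nat)) w * Im (cf k 1%nat) + py (px (X 1%nat)) w * (- Re (cf k 1%nat)))
      + (px (px (X 2%nat)) w * Im (cf k 2%nat) + py (px (X 2%nat)) w * (- Re (cf k 2%nat)))).
    + apply (filter_imp U); [| exact (HU z Hz)].
      intros w Hw.
      destruct (Hf 0%nat w ltac:(lia) Hw) as [A0 B0].
      destruct (Hf 1%nat w ltac:(lia) Hw) as [A1 B1].
      destruct (Hf 2%nat w ltac:(lia) Hw) as [A2 B2].
      unfold lin, Re, Im in *. simpl. rewrite <- A0, <- A1, <- A2.
      replace (py (px (X 0%nat)) w) with (- snd (phid 0%nat w)) by lra.
      replace (py (px (X 1%nat)) w) with (- snd (phid 1%nat w)) by lra.
      replace (py (px (X 2%nat)) w) with (- snd (phid 2%nat w)) by lra.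
      ring.
    + apply (cont_comb (fun j => px (px (X j))) (fun j => py (px (X j)))
        (fun j => Im (cf k j)) (fun j => - Re (cf k j))). exact Hc.
Qed.

Lemma imm_alg (s c e P1 P2 R1 R2 W1 W2 : R) : 0 < c -> c^2*e = 1 -> s^2 + c^2 = 1 ->
  s/2*((1-e)*P1 + (1+e)*R2) = 0 -> c/2*((1+e)*P1 + (1-e)*R2) = 0 ->
  (1-e)*P2 - (1+e)*R1 = 0 -> W1 = 0 ->
  P1^2 - P2^2 + R1^2 - R2^2 + W1^2 - W2^2 = 0 -> P1 = 0 /\ R1 = 0.
Proof.
  intros Hc He Hsc E0 E1 E2 E3 N.
  assert (Hep : 0 < e) by nra.
  assert (E1' : (1+e)*P1 + (1-e)*R2 = 0).
  { apply Rmult_integral in E1. destruct E1 as [H|H]; [lra|exact H]. }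
  destruct (Req_dec s 0) as [Hs|Hs].
  - subst s. assert (Hc2 : c^2 = 1) by lra. rewrite Hc2 in He.
    assert (e = 1) by lra. subst e. split; lra.
  - assert (E0' : (1-e)*P1 + (1+e)*R2 = 0).
    { apply Rmult_integral in E0. destruct E0 as [H|H]; [|exact H].
      exfalso. apply Hs. lra. }
    assert (HPR : e * (P1 - R2) = 0) by lra.
    apply Rmult_integral in HPR. destruct HPR as [H|H]; [lra|].
    assert (HP1 : P1 = 0) by lra. assert (HR2 : R2 = 0) by lra.
    subst P1 R2 W1.
    assert (HN' : R1^2 = P2^2 + W2^2) by lra.
    assert (E2' : (1+e)*R1 = (1-e)*P2) by lra.
    assert (H5 : (1+e)^2*(P2^2+W2^2) = (1-e)^2*P2^2).
    { rewrite <- HN'. replace ((1+e)^2*R1^2) with (((1+e)*R1)^2) by ring.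
      rewrite E2'. ring. }
    assert (H6 : 4*e*P2^2 + (1+e)^2*W2^2 = 0) by nra.
    assert (HP2 : P2^2 = 0) by nra.
    assert (P2 = 0) by nra. subst P2.
    split; [reflexivity|]. nra.
Qed.

Theorem corollary5p4
  (U : C -> Prop) (P : C -> Prop) (G Psi : C -> C)
  (phi : nat -> C -> C) (X : nat -> C -> R) (theta : R) :
  simply_connected_domain U ->
  discrete_in U P ->
  holomorphic_on U Psi ->
  holomorphic_on (fun z => U z /\ ~ P z) G ->
  (forall k, (k < 3)%nat -> holomorphic_on U (phi k)) ->
  (forall k z, (k < 3)%nat -> U z -> ~ P z -> phi k z = weierstrass_phi G Psi k z) ->
  Re_integral_param U 3 phi X ->
  conformal_harmonic_immersion U 3 X ->
  - (PI / 2) < theta < PI / 2 ->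
  exists (tphi : nat -> C -> C) (Xt : nat -> C -> R),
    (forall k, (k < 4)%nat -> holomorphic_on U (tphi k)) /\
    (forall k z, (k < 4)%nat -> U z -> ~ P z -> tphi k z = tilde_phi theta G Psi k z) /\
    Re_integral_param U 4 tphi Xt /\
    conformal_harmonic_immersion U 4 Xt /\
    degenerate_on U 4 Xt.
Proof.
  intros [_ [HU _]] _ _ _ Hphi Hphiw [F HF] [HXh [HXc HXi]] Hth.
  set (s := sin theta). set (c := cos theta).
  assert (Hc : 0 < c) by (apply cos_gt_0; lra).
  assert (Hc0 : c <> 0) by (intro; lra).
  set (e := / (c^2)).
  assert (He : c^2 * e = 1) by (unfold e; field; exact Hc0).
  assert (Hsc : s^2 + c^2 = 1).
  { pose proof (sin2_cos2 theta) as H. unfold Rsqr in H. fold s c in H. lra. }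
  pose (phid := fun j w => C_derive (phi j) w).
  assert (Hphid : forall j w, (j < 3)%nat -> U w -> Cder (phi j) w (phid j w)).
  { intros j w Hj Hw. apply C_derive_correct. exact w. apply (Hphi j Hj w Hw). }
  assert (HFd : forall j w, (j < 3)%nat -> U w -> Cder (F j) w (phi j w)).
  { intros j w Hj Hw. exact (proj1 (HF j Hj) w Hw). }
  assert (HFX : forall j w, (j < 3)%nat -> U w -> X j w = Re (F j w)).
  { intros j w Hj Hw. exact (proj2 (HF j Hj) w Hw). }
  set (cf := cfs s c e).
  pose (Ft := fun k w => lin cf k (F 0%nat w) (F 1%nat w) (F 2%nat w)).
  pose (tphi := fun k w => lin cf k (phi 0%nat w) (phi 1%nat w) (phi 2%nat w)).
  pose (dt := fun k w => lin cf k (phid 0%nat w) (phid 1%nat w) (phid 2%nat w)).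
  pose (Xt := fun k w => Re (Ft k w)).
  assert (HFt : forall k w, U w -> Cder (Ft k) w (tphi k w)).
  { intros k w Hw. apply lin_derive; apply HFd; auto; lia. }
  assert (Htd : forall k w, U w -> Cder (tphi k) w (dt k w)).
  { intros k w Hw. apply lin_derive; apply Hphid; auto; lia. }
  assert (SX : forall j w, (j < 3)%nat -> U w ->
    (rdiff_at (X j) w /\ px (X j) w = Re (phi j w) /\ py (X j) w = - Im (phi j w)) /\
    (rdiff_at (px (X j)) w /\ px (px (X j)) w = Re (phid j w) /\ py (px (X j)) w = - Im (phid j w)) /\
    (rdiff_at (py (X j)) w /\ px (py (X j)) w = - Im (phid j w) /\ py (py (X j)) w = - Re (phid j w))).
  { intros j w Hj Hw. apply (second U (F j) (phi j) (phid j) (X j)); auto;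
    intros; first [now apply HFd | now apply Hphid | now apply HFX]. }
  assert (ST : forall k w, U w ->
    (rdiff_at (Xt k) w /\ px (Xt k) w = Re (tphi k w) /\ py (Xt k) w = - Im (tphi k w)) /\
    (rdiff_at (px (Xt k)) w /\ px (px (Xt k)) w = Re (dt k w) /\ py (px (Xt k)) w = - Im (dt k w)) /\
    (rdiff_at (py (Xt k)) w /\ px (py (Xt k)) w = - Im (dt k w) /\ py (py (Xt k)) w = - Re (dt k w))).
  { intros k w Hw. apply (second U (Ft k) (tphi k) (dt k) (Xt k)); auto. }
  assert (DC : forall k z, U z -> continuous (fun w => Re (dt k w)) z /\ continuous (fun w => Im (dt k w)) z).
  { intros k z Hz. apply (dt_cont U z phid X cf k HU Hz).
    - intros j w Hj Hw. destruct (SX j w Hj Hw) as [_ [[_ [A B]] _]]. split; [now rewrite A| rewrite B; ring].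
    - intros j Hj. destruct (HXh j Hj) as [H2 _]. destruct (H2 z Hz) as [_ [_ [_ [Q1 [Q2 _]]]]]. auto. }
  exists tphi, Xt.
  split; [| split; [| split; [| split]]].
  - intros k Hk z Hz. exists (dt k z). now apply Htd.
  - intros k z Hk Hz HPz. unfold tphi, lin.
    rewrite (Hphiw 0%nat z), (Hphiw 1%nat z), (Hphiw 2%nat z); auto; try lia.
    unfold weierstrass_phi, tilde_phi, cf, cfs.
    destruct (G z) as [g1 g2]. destruct (Psi z) as [p1 p2]. unfold e.
    destruct k as [|[|[|[|k]]]]; [| | | | lia]; apply injective_projections; simpl; fold s c; field; repeat split; try exact Hc0; intro HH; nra.
  - exists Ft. intros k Hk. split; [intros w Hw; now apply HFt | intros; reflexivity].
  - split; [| split].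
    + intros k Hk. split.
      * intros z Hz. destruct (ST k z Hz) as [[A1 _] [[A2 _] [A3 _]]].
        destruct (DC k z Hz) as [C1 C2].
        assert (Hl : locally z U) by exact (HU z Hz).
        split; [exact A1|]. split; [exact A2|]. split; [exact A3|].
        split; [| split; [| split]].
        -- apply continuous_ext_loc with (g := fun w => Re (dt k w)); [|exact C1].
           apply (filter_imp U); [|exact Hl]. intros w Hw. symmetry. apply (ST k w Hw).
        -- apply continuous_ext_loc with (g := fun w => - Im (dt k w)); [|now apply cont_opp].
           apply (filter_imp U); [|exact Hl]. intros w Hw. symmetry. apply (ST k w Hw).
        -- apply continuous_ext_loc with (g := fun w => - Im (dt k w)); [|now apply cont_opp].
           apply (filter_imp U); [|exact Hl]. intros w Hw. symmetry. apply (ST k w Hw).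
        -- apply continuous_ext_loc with (g := fun w => - Re (dt k w)); [|now apply cont_opp].
           apply (filter_imp U); [|exact Hl]. intros w Hw. symmetry. apply (ST k w Hw).
      * intros z Hz. destruct (ST k z Hz) as [_ [[_ [A _]] [_ [_ B]]]]. rewrite A, B. ring.
    + intros z Hz. destruct (HXc z Hz) as [C1 C2]. cbn [rsum] in *.
      destruct (SX 0%nat z ltac:(lia) Hz) as [[_ [A0 B0]] _].
      destruct (SX 1%nat z ltac:(lia) Hz) as [[_ [A1 B1]] _].
      destruct (SX 2%nat z ltac:(lia) Hz) as [[_ [A2 B2]] _].
      rewrite A0, B0, A1, B1, A2, B2 in C1, C2.
      destruct (ST 0%nat z Hz) as [[_ [T0 U0]] _].
      destruct (ST 1%nat z Hz) as [[_ [T1 U1]] _].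
      destruct (ST 2%nat z Hz) as [[_ [T2 U2]] _].
      destruct (ST 3%nat z Hz) as [[_ [T3 U3]] _].
      rewrite T0, U0, T1, U1, T2, U2, T3, U3.
      unfold tphi, lin, cf, cfs in *.
      destruct (phi 0%nat z) as [a0 b0]. destruct (phi 1%nat z) as [a1 b1].
      destruct (phi 2%nat z) as [a2 b2]. simpl in *.
      assert (Hsc' : s^2 + c^2 - 1 = 0) by lra.
      assert (He' : c^2 * e - 1 = 0) by lra.
      split.
      * match type of C1 with ?L1 = ?R1 => match goal with |- ?L = ?R =>
          assert (Hid : L - R = (L1 - R1) + (s^2 + c^2 - 1) / 4 * ((((1-e)*a0 + (1+e)*b1))^2 - ((1-e)*b0 - (1+e)*a1)^2)
             + (c^2 * e - 1) * (a0^2 - b0^2 + a1^2 - b1^2)) by field end end.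
        rewrite Hsc', He' in Hid. lra.
      * match type of C2 with ?L1 = ?R1 => match goal with |- ?L = ?R =>
          assert (Hid : L - R = (L1 - R1) + (s^2 + c^2 - 1) / 4 * (- (((1-e)*a0 + (1+e)*b1) * ((1-e)*b0 - (1+e)*a1)))
             + (c^2 * e - 1) * (- (a0 * b0 + a1 * b1))) by field end end.
        rewrite Hsc', He' in Hid. lra.
    + intros z Hz a b Hab. apply (HXi z Hz a b).
      destruct (HXc z Hz) as [C1 C2]. cbn [rsum] in *.
      destruct (SX 0%nat z ltac:(lia) Hz) as [[_ [A0 B0]] _].
      destruct (SX 1%nat z ltac:(lia) Hz) as [[_ [A1 B1]] _].
      destruct (SX 2%nat z ltac:(lia) Hz) as [[_ [A2 B2]] _].
      rewrite A0, B0, A1, B1, A2, B2 in C1, C2.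
      destruct (ST 0%nat z Hz) as [[_ [T0 U0]] _].
      destruct (ST 1%nat z Hz) as [[_ [T1 U1]] _].
      destruct (ST 2%nat z Hz) as [[_ [T2 U2]] _].
      destruct (ST 3%nat z Hz) as [[_ [T3 U3]] _].
      pose proof (Hab 0%nat ltac:(lia)) as H0. pose proof (Hab 1%nat ltac:(lia)) as H1.
      pose proof (Hab 2%nat ltac:(lia)) as H2. pose proof (Hab 3%nat ltac:(lia)) as H3.
      rewrite T0, U0 in H0. rewrite T1, U1 in H1. rewrite T2, U2 in H2. rewrite T3, U3 in H3.
      intros j Hj.
      unfold tphi, lin, cf, cfs in *.
      destruct (phi 0%nat z) as [a0 b0]. destruct (phi 1%nat z) as [a1 b1].
      destruct (phi 2%nat z) as [a2 b2]. simpl in *.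
      assert (E0 : s/2*((1-e)*(a*a0 - b*b0) + (1+e)*(a*b1 + b*a1)) = 0).
      { match type of H0 with ?L = _ => replace (s/2*((1-e)*(a*a0 - b*b0) + (1+e)*(a*b1 + b*a1))) with L by ring end. exact H0. }
      assert (E1 : c/2*((1+e)*(a*a0 - b*b0) + (1-e)*(a*b1 + b*a1)) = 0).
      { match type of H1 with ?L = _ => replace (c/2*((1+e)*(a*a0 - b*b0) + (1-e)*(a*b1 + b*a1))) with L by ring end. exact H1. }
      assert (E2 : (1-e)*(a*b0 + b*a0) - (1+e)*(a*a1 - b*b1) = 0).
      { match type of H2 with ?L = _ => replace ((1-e)*(a*b0 + b*a0) - (1+e)*(a*a1 - b*b1)) with (-2 * L) by field end. rewrite H2. ring. }
      assert (E3 : a*a2 - b*b2 = 0).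
      { match type of H3 with ?L = _ => replace (a*a2 - b*b2) with L by ring end. exact H3. }
      assert (N : (a*a0 - b*b0)^2 - (a*b0 + b*a0)^2 + (a*a1 - b*b1)^2 - (a*b1 + b*a1)^2
                  + (a*a2 - b*b2)^2 - (a*b2 + b*a2)^2 = 0).
      { match type of C1 with ?L1 = ?R1 => match type of C2 with ?L2 = _ =>
          assert (HC : L1 - R1 = 0) by lra; replace ((a*a0 - b*b0)^2 - (a*b0 + b*a0)^2 + (a*a1 - b*b1)^2 - (a*b1 + b*a1)^2
                  + (a*a2 - b*b2)^2 - (a*b2 + b*a2)^2) with ((a^2-b^2)*(L1-R1) + 4*a*b*L2) by ring end end.
        rewrite HC, C2. ring. }
      destruct (imm_alg s c e _ _ _ _ _ _ Hc He Hsc E0 E1 E2 E3 N) as [HP HR].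
      destruct j as [|[|[|j]]]; [rewrite A0, B0 | rewrite A1, B1 | rewrite A2, B2 | lia]; lra.
  - exists (fun k => match k with 0%nat => RtoC 1 | 2%nat => (0, s) | _ => RtoC 0 end).
    split.
    + exists 0%nat. split; [lia|]. unfold RtoC. intro H. injection H. lra.
    + intros z Hz. cbn [csum]. unfold dzeta.
      destruct (ST 0%nat z Hz) as [[_ [T0 U0]] _].
      destruct (ST 1%nat z Hz) as [[_ [T1 U1]] _].
      destruct (ST 2%nat z Hz) as [[_ [T2 U2]] _].
      destruct (ST 3%nat z Hz) as [[_ [T3 U3]] _].
      rewrite T0, U0, T1, U1, T2, U2, T3, U3.
      unfold tphi, lin, cf, cfs.
      destruct (phi 0%nat z) as [a0 b0]. destruct (phi 1%nat z) as [a1 b1].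
      destruct (phi 2%nat z) as [a2 b2]. unfold RtoC.
      apply injective_projections; simpl; field.
Qed.
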